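(* Let $\mathfrak{M}$ be a variety of associative rings such that for all finite rings $R,S\in\mathfrak{M}$, $\Gamma(R)\cong\Gamma(S)$ implies $R\cong S$. Then for every finite ring $R\in\mathfrak{M}$ there exist pairwise distinct prime numbers $q_1,\ldots,q_t$ such that $q_1^2q_2^2\cdots q_t^2R=(0)$.
   Context: All rings are associative, not necessarily commutative and not necessarily with identity. For a ring $R$, the zero-divisor graph $\Gamma(R)$ is the graph whose vertices are all nonzero (one-sided or two-sided) zero-divisors of $R$, two distinct vertices $x,y$ being adjacent iff $xy=0$ or $yx=0$. *)

(* Defs.v *)
From HB Require Import structures.
From mathcomp Require Import all_boot all_order all_algebra.
Set Implicit Arguments. Unset Strict Implicit. Unset Printing Implicit Defensive.
Import GRing.Theory.
Local Open Scope ring_scope.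

Record finRng := FinRng {
  rcar :> finZmodType;
  rmul : rcar -> rcar -> rcar;
  rmulA : forall x y z, rmul x (rmul y z) = rmul (rmul x y) z;
  rmulDl : forall x y z, rmul (x + y) z = rmul x z + rmul y z;
  rmulDr : forall x y z, rmul x (y + z) = rmul x y + rmul x z }.

(* Terms of the free (non-unital) associative ring on countably many
   variables x_0, x_1, ...  (integer coefficients via 0, +, -). *)
Inductive rterm : Type :=
  | RVar of nat
  | RZero
  | RAdd of rterm & rterm
  | ROpp of rterm
  | RMul of rterm & rterm.

Fixpoint reval (R : finRng) (v : nat -> R) (t : rterm) : R :=
  match t with
  | RVar n => v n
  | RZero => 0
  | RAdd a b => reval v a + reval v b
  | ROpp a => - reval v a
  | RMul a b => rmul (reval v a) (reval v b)
  end.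

(* A variety of associative rings is determined by a set of identities
   t1 = t2; a ring belongs to it iff it satisfies all of them. *)
Definition variety := rterm * rterm -> Prop.

Definition in_variety (M : variety) (R : finRng) : Prop :=
  forall e, M e -> forall v : nat -> R, reval v e.1 = reval v e.2.

(* Nonzero (one-sided or two-sided) zero-divisors: the vertices of Gamma(R). *)
Definition zero_divisor (R : finRng) (x : R) : bool :=
  (x != 0) && [exists y : R, (y != 0) && ((rmul x y == 0) || (rmul y x == 0))].
Arguments zero_divisor : clear implicits.

Definition zd_adj (R : finRng) (x y : R) : bool :=
  (x != y) && ((rmul x y == 0) || (rmul y x == 0)).

Definition gamma_iso (R S : finRng) : Prop :=
  exists f : R -> S,
    [/\ {in zero_divisor R, forall x, zero_divisor S (f x)},
        {in zero_divisor R &, injective f},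
        (forall y, zero_divisor S y -> exists2 x, zero_divisor R x & f x = y) &
        {in zero_divisor R &, forall x y, zd_adj (f x) (f y) = zd_adj x y}].

Definition ring_iso (R S : finRng) : Prop :=
  exists f : R -> S,
    [/\ bijective f,
        (forall x y, f (x + y) = f x + f y) &
        (forall x y, f (rmul x y) = rmul (f x) (f y))].

(* Main.v *)
From HB Require Import structures.
Require Import Defs.
From mathcomp Require Import all_boot all_order all_algebra all_fingroup cyclic zify.
Import GRing.Theory FinRing.Theory.
Set Implicit Arguments. Unset Strict Implicit. Unset Printing Implicit Defensive.
Local Open Scope ring_scope.

Section Basic.
Variable R : finRng.
Implicit Types x y : R.

Lemma rmul0l y : rmul 0 y = 0 :> R.
Proof. by apply: (@addrI _ (rmul 0 y)); rewrite -rmulDl !addr0. Qed.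
Lemma rmul0r y : rmul y 0 = 0 :> R.
Proof. by apply: (@addrI _ (rmul y 0)); rewrite -rmulDr !addr0. Qed.
Lemma rmulNl x y : rmul (- x) y = - rmul x y.
Proof. by apply: (@addrI _ (rmul x y)); rewrite -rmulDl !subrr rmul0l. Qed.
Lemma rmulNr x y : rmul y (- x) = - rmul y x.
Proof. by apply: (@addrI _ (rmul y x)); rewrite -rmulDr !subrr rmul0r. Qed.
Lemma rmulnl x y n : rmul (x *+ n) y = rmul x y *+ n.
Proof. by elim: n => [|n IH]; rewrite ?rmul0l // !mulrS rmulDl IH. Qed.
Lemma rmulnr x y n : rmul y (x *+ n) = rmul y x *+ n.
Proof. by elim: n => [|n IH]; rewrite ?rmul0r // !mulrS rmulDr IH. Qed.
Lemma rmulzl x y z : rmul (x *~ z) y = rmul x y *~ z.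
Proof. by case: z => n /=; rewrite ?rmulNl rmulnl. Qed.
Lemma rmulzr x y z : rmul y (x *~ z) = rmul y x *~ z.
Proof. by case: z => n /=; rewrite ?rmulNr rmulnr. Qed.

Fixpoint rp (a : R) k := if k is k'.+1 then rmul a (rp a k') else a.

Lemma rp_mul a m n : rmul (rp a m) (rp a n) = rp a (m + n).+1.
Proof. by elim: m => [|m IH] //=; rewrite -rmulA IH. Qed.

End Basic.

Definition rhom (T R : finRng) (h : T -> R) :=
  (forall a b, h (a + b) = h a + h b) /\ (forall a b, h (rmul a b) = rmul (h a) (h b)).

Lemma rhom0 (T R : finRng) (h : T -> R) : rhom h -> h 0 = 0.
Proof.
case=> hD _; apply: (@addrI _ (h 0)); by rewrite -hD !addr0.
Qed.

Lemma rhomN (T R : finRng) (h : T -> R) a : rhom h -> h (- a) = - h a.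
Proof.
move=> hh; apply: (@addrI _ (h a)); by rewrite -hh.1 !subrr rhom0.
Qed.

Lemma rhom_reval (T R : finRng) (h : T -> R) v t : rhom h ->
  reval (fun n => h (v n)) t = h (reval v t).
Proof.
move=> hh; have [hD hM] := hh; elim: t => [n||a IHa b IHb|a IHa|a IHa b IHb] //=.
- by rewrite rhom0.
- by rewrite hD IHa IHb.
- by rewrite rhomN // IHa.
- by rewrite hM IHa IHb.
Qed.

Lemma variety_embed (M : variety) (R T : finRng) (I : Type) (hs : I -> T -> R) :
  in_variety M R -> (forall i, rhom (hs i)) ->
  (forall a b, (forall i, hs i a = hs i b) -> a = b) -> in_variety M T.
Proof.
move=> HR hh hinj e Me v; apply: hinj => i.
by rewrite -!rhom_reval //; apply: HR.
Qed.

Definition zring (V : finZmodType) : finRng.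
Proof.
refine (@FinRng V (fun _ _ => 0) _ _ _) => *; by rewrite ?addr0.
Defined.

Lemma zd_zring (V : finZmodType) (x : zring V) : zero_divisor (zring V) x = (x != 0).
Proof.
rewrite /zero_divisor; case: eqP => //= x0; apply/existsP; exists x.
by rewrite eqxx andbT; apply/eqP.
Qed.

Definition Fring (p : nat) : finRng :=
  @FinRng 'F_p (@GRing.mul _) (@mulrA _) (@mulrDl _) (@mulrDr _).

Definition Triv : finRng := zring 'I_1.

Lemma triv_variety (M : variety) : in_variety M Triv.
Proof. by move=> e _ v; apply: ord_inj; rewrite !ord1. Qed.

Lemma Fring_not_iso p : prime p -> ~ ring_iso (Fring p) Triv.
Proof.
move=> pp [g [gb _ _]].
have gi := bij_inj gb.
have : g 0 = g 1 by apply: ord_inj; rewrite !ord1.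
by move/gi/eqP; rewrite eq_sym oner_eq0.
Qed.

Lemma Fring_gamma p : prime p -> gamma_iso (Fring p) Triv.
Proof.
move=> pp; exists (fun _ => 0).
have zdF : forall x : Fring p, zero_divisor (Fring p) x = false.
  move=> x; rewrite /zero_divisor; apply/negP => /andP [x0 /existsP [y /andP [y0]]].
  by rewrite /= !mulf_eq0 (negPf x0) (negPf y0).
have zdT : forall x : Triv, zero_divisor Triv x = false.
  by move=> x; rewrite /zero_divisor ord1 eqxx.
split.
- by move=> x; rewrite /in_mem /= zdF.
- by move=> x y; rewrite /in_mem /= zdF.
- by move=> y; rewrite zdT.
- by move=> x y; rewrite /in_mem /= zdF.
Qed.

Fixpoint zeval (u : nat -> int) (t : rterm) : int :=
  match t with
  | RVar n => u n
  | RZero => 0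
  | RAdd a b => zeval u a + zeval u b
  | ROpp a => - zeval u a
  | RMul a b => zeval u a * zeval u b
  end.

Lemma reval_idem (R : finRng) (e : R) u t : rmul e e = e ->
  reval (fun n => e *~ u n) t = e *~ zeval u t.
Proof.
move=> ee; elim: t => [n||a IHa b IHb|a IHa|a IHa b IHb] //=.
- by rewrite IHa IHb mulrzDr.
- by rewrite IHa mulrNz.
- by rewrite IHa IHb rmulzl rmulzr ee -mulrzA mulrC.
Qed.

Lemma reval_Fring p u t :
  reval (R := Fring p) (fun n => (u n)%:~R) t = (zeval u t)%:~R.
Proof.
elim: t => [n||a IHa b IHb|a IHa|a IHa b IHb] //=.
- by rewrite IHa IHb intrD.
- by rewrite IHa mulrNz.
- by rewrite IHa IHb intrM.
Qed.

Lemma eq_reval (R : finRng) (v w : nat -> R) t : (forall n, v n = w n) -> reval v t = reval w t.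
Proof. by move=> vw; elim: t => [n||a IHa b IHb|a IHa|a IHa b IHb] /=; rewrite ?IHa ?IHb ?vw. Qed.

Lemma mulrn_order (V : finZmodType) (x : V) m : x *+ m = 0 -> (#[x]%g %| m)%N.
Proof. by move=> h; rewrite order_dvdn zmodXgE h. Qed.

Lemma Fp_of_mulrz (R : finRng) (e : R) z : prime (pdiv #[e]%g) ->
  e *~ z = 0 -> (z%:~R : 'F_(pdiv #[e]%g)) = 0.
Proof.
move=> pp.
have H : forall m, e *+ m = 0 -> (m%:R : 'F_(pdiv #[e]%g)) = 0.
  move=> m /mulrn_order hd.
  have := dvdn_trans (pdiv_dvd _) hd; rewrite /dvdn => /eqP hm.
  by rewrite -Fp_nat_mod // hm.
case: z => m /= h; first exact: H.
by rewrite NegzE mulrNz -pmulrn H ?oppr0 //; apply/eqP; rewrite -oppr_eq0 pmulrn -mulrNz -NegzE h.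
Qed.

Lemma no_idem (M : variety) :
  (forall R S : finRng, in_variety M R -> in_variety M S ->
     gamma_iso R S -> ring_iso R S) ->
  forall R : finRng, in_variety M R -> forall e : R, rmul e e = e -> e != 0 -> False.
Proof.
move=> H R HR e ee e0.
have n1 : (1 < #[e]%g)%N.
  by rewrite ltn_neqAle order_gt0 andbT eq_sym order_eq1.
have pp := pdiv_prime n1.
set p := pdiv #[e]%g in pp.
apply: (Fring_not_iso pp); apply: H; last exact: Fring_gamma.
- move=> t Mt v.
  pose u k : int := (val (v k) : nat)%:Z.
  have vu : forall k, v k = (u k)%:~R by move=> k; rewrite /u -pmulrn natr_Zp.
  rewrite !(eq_reval _ vu) !reval_Fring.
  have := HR t Mt (fun n => e *~ u n); rewrite !reval_idem // => h.
  apply/eqP; rewrite -subr_eq0 -intrB; apply/eqP; apply: Fp_of_mulrz => //.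
  by rewrite mulrzBr h subrr.
- exact: triv_variety.
Qed.

Lemma mulrn_mod (V : zmodType) (x : V) n m : x *+ m = 0 -> x *+ (n %% m) = x *+ n.
Proof.
move=> h; rewrite {2}(divn_eq n m) mulrnDr mulnC mulrnA h mul0rn add0r //.
Qed.

Lemma Zp_hom (V : zmodType) (x : V) n (a b : 'Z_n) : (1 < n)%N -> x *+ n = 0 ->
  x *+ val (a + b) = x *+ val a + x *+ val b.
Proof.
move=> n1 h; have h' : x *+ (Zp_trunc n).+2 = 0 by rewrite Zp_cast.
by rewrite /= mulrn_mod // mulrnDr.
Qed.

Lemma Zp_inj (V : finZmodType) (x : V) n (a b : 'Z_n) : (1 < n)%N -> #[x]%g = n ->
  x *+ val a = x *+ val b -> a = b.
Proof.
move=> n1 hx hab; apply: ord_inj.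
have : (x ^+ val a == x ^+ val b)%g by rewrite !zmodXgE hab.
have la : (val a < n)%N by apply: leq_trans (ltn_ord a) _; rewrite Zp_cast.
have lb : (val b < n)%N by apply: leq_trans (ltn_ord b) _; rewrite Zp_cast.
by rewrite eq_expg_mod_order hx !modn_small // => /eqP.
Qed.

Definition ZZ (p : nat) := ('Z_p * 'Z_p)%type.
HB.instance Definition _ p := GRing.Zmodule.on (ZZ p).
HB.instance Definition _ p := Finite.on (ZZ p).
Check fun p => (ZZ p : finZmodType).
Definition T1 p := zring 'Z_(p ^ 2).
Definition T2 p := zring (ZZ p).

Lemma zhom (R : finRng) (x : R) n : (1 < n)%N -> x *+ n = 0 -> rmul x x = 0 ->
  rhom (fun k : zring 'Z_n => x *+ val k).
Proof.
move=> n1 h xx; split => a b; first exact: Zp_hom.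
by rewrite /= rmulnl rmulnr xx !mul0rn.
Qed.

Lemma T1_T2_gamma p : prime p -> gamma_iso (T1 p) (T2 p).
Proof.
move=> pp; have p1 := prime_gt1 pp.
have p0 := prime_gt0 pp.
have p21 : (1 < p ^ 2)%N by rewrite (ltn_trans p1) // -{1}(expn1 p) ltn_exp2l.
pose f (k : T1 p) : T2 p := ((nat_of_ord k %/ p)%:R, (nat_of_ord k %% p)%:R).
have lk : forall k : T1 p, (nat_of_ord k < p ^ 2)%N.
  by move=> k; apply: leq_trans (ltn_ord k) _; rewrite Zp_cast.
have ltd : forall k : T1 p, (nat_of_ord k %/ p < p)%N.
  by move=> k; rewrite ltn_divLR // -expnSr lk.
have finj : injective f.
  move=> a b [] /(congr1 (@nat_of_ord _)) ha /(congr1 (@nat_of_ord _)) hb; apply: ord_inj.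
  move: ha hb; rewrite !val_Zp_nat // !modn_mod !(modn_small (ltd _)) => ha hb.
  by rewrite (divn_eq a p) (divn_eq b p) ha hb.
have f0 : f 0 = 0.
  by rewrite /f /= div0n mod0n.
have card : (#|T2 p| <= #|T1 p|)%N.
  by rewrite /T1 /T2 /= card_prod /ZZ !card_ord !Zp_cast // expnS expn1.
have fonto := inj_card_onto finj card.
have z1 : forall x : T1 p, zero_divisor (T1 p) x = (x != 0) by move=> x; exact: zd_zring.
have z2 : forall x : T2 p, zero_divisor (T2 p) x = (x != 0) by move=> x; exact: zd_zring.
exists f; split.
- move=> x; rewrite /in_mem /= z1 z2 => x0.
  by move: x0; apply: contraNneq => fx0; apply/eqP; apply: finj; rewrite fx0 f0.
- by move=> x y _ _; apply: finj.
- move=> y; rewrite z2 => y0; have /codomP [x yx] := fonto y.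
  exists x => //; rewrite z1; move: y0; apply: contraNneq => xe.
  by rewrite yx xe f0.
- by move=> x y _ _; rewrite /zd_adj /= !andbT (inj_eq finj).
Qed.

Lemma ZZ_mulrn p (u : ZZ p) n : u *+ n = (u.1 *+ n, u.2 *+ n).
Proof. elim: n => [|n IH]; first by rewrite !mulr0n. by rewrite !mulrS IH. Qed.



Lemma ZZ_p p (u : ZZ p) : prime p -> u *+ p = 0.
Proof.
move=> pp; rewrite ZZ_mulrn.
have h : forall a : 'Z_p, a *+ p = 0.
  by move=> a; rewrite -mulr_natr pchar_Zp ?prime_gt1 // mulr0.
by rewrite !h.
Qed.

Lemma T1_T2_not_iso p : prime p -> ~ ring_iso (T1 p) (T2 p).
Proof.
move=> pp [g [gb gD _]]; have p1 := prime_gt1 pp.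
have g0 : g 0 = 0 by apply: (@addrI _ (g 0)); rewrite -gD !addr0.
have gn : forall a n, g (a *+ n) = g a *+ n.
  by move=> a; elim=> [|n IH]; rewrite ?g0 // !mulrS gD IH.
have : g ((1 : T1 p) *+ p) = g 0 by rewrite gn ZZ_p // g0.
move/(bij_inj gb)/(congr1 (@nat_of_ord _)).
have p21 : (p < p ^ 2)%N by rewrite -{1}(expn1 p) ltn_exp2l.
rewrite val_Zp_nat ?(ltn_trans p1) // modn_small //.
by move/eqP; rewrite gtn_eqF ?prime_gt0.
Qed.

Lemma order_pfactor (V : finZmodType) (x : V) p k : prime p ->
  x *+ (p ^ k.+1)%N = 0 -> x *+ (p ^ k)%N != 0 -> #[x]%g = (p ^ k.+1)%N.
Proof.
move=> pp h1 h2; have /(dvdn_pfactor _ _ pp) [m le_m ox] := mulrn_order h1.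
rewrite ox; have -> : m = k.+1; last by [].
apply/eqP; rewrite eqn_leq le_m /= ltnNge; apply: contra h2 => hm.
by rewrite -zmodXgE -order_dvdn ox; apply: dvdn_exp2l.
Qed.

Lemma zero_square (M : variety) :
  (forall R S : finRng, in_variety M R -> in_variety M S ->
     gamma_iso R S -> ring_iso R S) ->
  forall R : finRng, in_variety M R -> forall p (w : R), prime p ->
  rmul w w = 0 -> w *+ (p ^ 2)%N = 0 -> w *+ p != 0 -> False.
Proof.
move=> H R HR p w pp ww w2 w1.
have p1 := prime_gt1 pp.
have p21 : (1 < p ^ 2)%N by rewrite (ltn_trans p1) // -{1}(expn1 p) ltn_exp2l.
have ow : #[w]%g = (p ^ 2)%N by apply: order_pfactor; rewrite ?expn1.
pose z := w *+ p.
have zz : rmul z z = 0 by rewrite rmulnl rmulnr ww !mul0rn.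
have zp : z *+ p = 0 by rewrite /z -mulrnA -{2}(expn1 p) -expnS.
have oz : #[z]%g = p by rewrite -(expn1 p); apply: order_pfactor; rewrite ?expn1 ?expn0.
apply: (T1_T2_not_iso pp); apply: H; last exact: T1_T2_gamma.
- apply: (@variety_embed M R (T1 p) unit (fun _ k => w *+ nat_of_ord k)) => //.
    by move=> _; apply: zhom.
  by move=> a b /(_ tt); apply: Zp_inj.
- apply: (@variety_embed M R (T2 p) bool
     (fun b u => z *+ nat_of_ord (if b then u.1 else u.2))) => //.
    move=> b; split=> u v.
      case: b.
        exact: (@Zp_hom _ z p u.1 v.1 p1 zp).
      exact: (@Zp_hom _ z p u.2 v.2 p1 zp).
    by case: b; rewrite /= rmulnl rmulnr zz !mul0rn.
  move=> [a1 a2] [b1 b2] h.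
  have e1 := Zp_inj p1 oz (h true).
  have e2 := Zp_inj p1 oz (h false).
  by rewrite /= in e1 e2; rewrite e1 e2.
Qed.

Lemma idem_or_nil (R : finRng) (a : R) :
  (exists N, rp a N = 0) \/ (exists e : R, rmul e e = e /\ e != 0).
Proof.
pose f (k : 'I_#|R|.+1) := rp a k.
have : ~~ injectiveb f.
  apply/negP => /injectiveP /leq_card; rewrite card_ord ltnn //.
case/injectivePn => i0 [j0 ne fij].
have [i [j [lij eij]]] : exists i j, (i < j)%N /\ rp a i = rp a j.
  case: (ltngtP i0 j0) => h.
  - by exists i0, j0.
  - by exists j0, i0.
  - by move: ne; rewrite (val_inj h) eqxx.
pose d := (j - i)%N.
have d0 : (0 < d)%N by rewrite subn_gt0.
have per1 : forall m, rp a (i + m + d) = rp a (i + m).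
  case=> [|m].
    have E : (i + 0 + d = j)%N by rewrite /d; lia.
    by rewrite E addn0 eij.
  have -> : (i + m.+1 + d = (m + j).+1)%N by rewrite /d; lia.
  by rewrite -rp_mul -eij rp_mul addnC addnS.
have per : forall c m, rp a (i + m + c * d) = rp a (i + m).
  elim=> [|c IH] m; first by rewrite mul0n addn0.
  have -> : (i + m + c.+1 * d = i + (m + c * d) + d)%N by rewrite mulSn; lia.
  by rewrite per1 addnA IH.
pose t := (d * i.+1).-1.
have tS : t.+1 = (d * i.+1)%N by rewrite /t prednK // muln_gt0 d0.
have ti : (i <= t)%N by rewrite -ltnS tS -{1}(mul1n i.+1) leq_mul2r d0 orbT.
have ee : rmul (rp a t) (rp a t) = rp a t.
  rewrite rp_mul -addSn tS.
  have -> : (d * i.+1 + t = i + (t - i) + i.+1 * d)%N by rewrite mulnC; lia.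
  rewrite per; congr rp; lia.
case: (eqVneq (rp a t) 0) => e0; first by left; exists t.
by right; exists (rp a t).
Qed.

Lemma cube (M : variety) :
  (forall R S : finRng, in_variety M R -> in_variety M S ->
     gamma_iso R S -> ring_iso R S) ->
  forall R : finRng, in_variety M R -> forall p (x : R), prime p ->
  x *+ (p ^ 3)%N = 0 -> x *+ (p ^ 2)%N = 0.
Proof.
move=> H R HR p x pp x3.
case: (eqVneq (x *+ (p ^ 2)%N) 0) => // x2; exfalso.
case: (idem_or_nil x) => [[N xN]|[e [ee e0]]]; last exact: (no_idem H HR ee e0).
have p2 : (p * p = p ^ 2)%N by rewrite expnS expn1.
have p3 : (p * p ^ 2 = p ^ 3)%N by rewrite [(p ^ 3)%N]expnS.
pose y k := rp x (2 ^ k).-1.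
have yS : forall k, rmul (y k) (y k) = y k.+1.
  move=> k; rewrite /y rp_mul; congr rp.
  have := expn_gt0 2 k; rewrite expnS; lia.
have rpz : forall m, (N <= m)%N -> rp x m = 0.
  move=> m hm; case: (eqVneq m N) => [->|hNm]; first exact: xN.
  have -> : m = ((m - N).-1 + N).+1 by lia.
  by rewrite -rp_mul xN rmul0r.
have yp3 : forall k, y k *+ (p ^ 3)%N = 0.
  move=> k; rewrite /y; case: (2 ^ k).-1 => [|m] //=.
  by rewrite -rmulnl x3 rmul0l.
have yk : forall k, y k *+ (p ^ 2)%N != 0.
  elim=> [|k IH]; first exact: x2.
  apply/negP => /eqP h.
  apply: (zero_square H HR (w := y k *+ p) pp).
  - by rewrite rmulnl rmulnr yS -mulrnA p2 h.
  - by rewrite -mulrnA p3 yp3.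
  - by rewrite -mulrnA p2.
have := yk N; rewrite /y rpz ?mul0rn ?eqxx //.
have := ltn_expl N (ltnSn 1); lia.
Qed.

Lemma order_small (M : variety) :
  (forall R S : finRng, in_variety M R -> in_variety M S ->
     gamma_iso R S -> ring_iso R S) ->
  forall R : finRng, in_variety M R -> forall p (x : R), prime p ->
  (logn p #[x]%g <= 2)%N.
Proof.
move=> H R HR p x pp; rewrite leqNgt; apply/negP => h3.
have o0 := order_gt0 x.
have d3 : (p ^ 3 %| #[x]%g)%N by rewrite pfactor_dvdn.
pose c := (#[x]%g %/ p ^ 3)%N.
have oc : #[x]%g = (c * p ^ 3)%N by rewrite /c divnK.
have c0 : (0 < c)%N by move: o0; rewrite oc muln_gt0 => /andP [].
have := @cube M H R HR p (x *+ c) pp.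
rewrite -!mulrnA -oc -zmodXgE expg_order => /(_ erefl) /eqP.
rewrite -zmodXgE -order_dvdn => /dvdn_leq.
rewrite muln_gt0 c0 expn_gt0 prime_gt0 //= => /(_ erefl).
rewrite oc leq_pmul2l // leqNgt ltn_exp2l ?prime_gt1 //.
Qed.

Unset Implicit Arguments.

Theorem proposition8 (M : variety) :
  (forall R S : finRng, in_variety M R -> in_variety M S ->
     gamma_iso R S -> ring_iso R S) ->
  forall R : finRng, in_variety M R ->
    exists qs : seq nat,
      [/\ uniq qs, all prime qs &
          forall x : R, x *+ (\prod_(q <- qs) q ^ 2)%N = 0].
Proof.
move=> H R HR; exists (primes #|R|); split.
- exact: primes_uniq.
- by apply/allP => q; rewrite mem_primes => /andP [].
move=> x; apply/eqP; rewrite -zmodXgE -order_dvdn.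
apply/(dvdn_partP _ (order_gt0 x)) => p; rewrite inE mem_primes => /and3P [pp _ px].
rewrite p_part; apply: dvdn_trans (dvdn_exp2l p (order_small H HR x pp)) _.
have pR : p \in primes #|R|.
  have c0 : (0 < #|R|)%N by apply/card_gt0P; exists x.
  rewrite mem_primes pp c0 /= (dvdn_trans px) //.
  by rewrite -cardsT; apply: order_dvdG; rewrite inE.
by rewrite (big_rem _ pR) /= dvdn_mulr.
Qed.
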